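(* Let $X$ be a set and $\mathcal{T}$ a topology on $X$. There exists a surjection $f:\mathcal{P}(X)\to\{-1,0,1\}$ satisfying $f(A)+f(B)=f(A\cup B)+f(A\cap B)$ for all $A,B\subseteq X$, such that $\mathcal{T}=\{\varnothing,X\}\cup f^{-1}(1)$ or $\mathcal{T}=\{\varnothing,X\}\cup f^{-1}(-1)$, if and only if $\mathcal{T}$ has one of the following forms: (Form 1) there exist $a\in X$ and an ultrafilter $\mathcal{F}'$ on $X\setminus\{a\}$ such that $\mathcal{T}=\{\varnothing,X\}\cup\mathcal{F}'$ or $\mathcal{T}=\{\varnothing,X\}\cup\{\{a\}\cup F: F\in\mathcal{F}'\}$; (Form 2) there exist $A\subseteq X$ and free ultrafilters $\mathcal{F}'$ on $A$ and $\mathcal{F}''$ on $X\setminus A$ such that $\mathcal{T}=\{\varnothing,X\}\cup\{F'\cup F'': F'\in\mathcal{F}',\,F''\in\mathcal{F}''\}$; (Form 3) there exist $a\ne b$ in $X$ such that $\mathcal{T}=\{\varnothing,X\}\cup\mathcal{P}(X\setminus\{a,b\})$.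
   Context: $\mathcal{P}(Y)$ denotes the power set of $Y$. An ultrafilter on a set $Y$ is a maximal proper filter of subsets of $Y$; it is free if the intersection of all its members is empty. *)

(* Defs.v *)
From Stdlib Require Import ZArith.

Section D.
Context {X : Type}.

Definition set_empty (U : X -> Prop) : Prop := forall x, ~ U x.
Definition set_full (U : X -> Prop) : Prop := forall x, U x.
Definition subset (U V : X -> Prop) : Prop := forall x, U x -> V x.
Definition set_eq (U V : X -> Prop) : Prop := forall x, U x <-> V x.
Definition union (U V : X -> Prop) : X -> Prop := fun x => U x \/ V x.
Definition inter (U V : X -> Prop) : X -> Prop := fun x => U x /\ V x.

Definition is_topology (T : (X -> Prop) -> Prop) : Prop :=
  T (fun _ => False) /\ T (fun _ => True) /\
  (forall S : (X -> Prop) -> Prop, (forall U, S U -> T U) ->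
      T (fun x => exists U, S U /\ U x)) /\
  (forall U V, T U -> T V -> T (inter U V)).

Definition proper_filter_on (Y : X -> Prop) (F : (X -> Prop) -> Prop) : Prop :=
  (forall U, F U -> subset U Y) /\
  F Y /\
  ~ F (fun _ => False) /\
  (forall U V, F U -> subset U V -> subset V Y -> F V) /\
  (forall U V, F U -> F V -> F (inter U V)).

Definition ultrafilter_on (Y : X -> Prop) (F : (X -> Prop) -> Prop) : Prop :=
  proper_filter_on Y F /\
  forall G, proper_filter_on Y G -> (forall U, F U -> G U) -> forall U, G U -> F U.

Definition free_family (F : (X -> Prop) -> Prop) : Prop :=
  forall x, exists U, F U /\ ~ U x.

End D.

(* Main.v *)
Require Import Defs.
From Stdlib Require Import ZArith Lia Classical ClassicalEpsilon FunctionalExtensionality PropExtensionality.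
Open Scope Z_scope.

Ltac blia := cbv beta in *; lia.
Notation emp := (fun _ => False).
Notation full := (fun _ => True).
Notation cmp A := (fun x => ~ A x).
Notation dif A B := (fun x => A x /\ ~ B x).
Notation sg a := (fun x => x = a).

Lemma sext {X : Type} (U V : X -> Prop) : set_eq U V -> U = V.
Proof. intros H; apply functional_extensionality; intro x; apply propositional_extensionality; apply H. Qed.

Definition Mod {X : Type} (f : (X -> Prop) -> Z) :=
  forall A B, f A + f B = f (union A B) + f (inter A B).
Definition R3 {X : Type} (f : (X -> Prop) -> Z) := forall A, f A = -1 \/ f A = 0 \/ f A = 1.

Lemma split_f {X : Type} (f : (X -> Prop) -> Z) (Hm : Mod f) A Y :
  f A = f (inter A Y) + f (dif A Y) - f emp.
Proof.
  pose proof (Hm (inter A Y) (dif A Y)) as h.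
  replace (union (inter A Y) (dif A Y)) with A in h.
  2:{ apply sext; intro x; unfold union, inter; destruct (classic (Y x)); tauto. }
  replace (inter (inter A Y) (dif A Y)) with (fun _ : X => False) in h.
  2:{ apply sext; intro x; unfold inter; tauto. }
  lia.
Qed.

Lemma sub_split {X : Type} (f : (X -> Prop) -> Z) (Hm : Mod f) B C :
  subset B C -> f C = f B + f (dif C B) - f emp.
Proof.
  intros HBC. rewrite (split_f f Hm C B).
  replace (inter C B) with B; [lia|].
  apply sext; intro x; unfold inter; split; [intro h; split; auto|tauto].
Qed.

Lemma comp_f {X : Type} (f : (X -> Prop) -> Z) (Hm : Mod f) A :
  f A + f (cmp A) = f full + f emp.
Proof.
  rewrite (split_f f Hm full A).
  replace (inter full A) with A. 2:{ apply sext; intro x; unfold inter; tauto. }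
  replace (fun x => True /\ ~ A x) with (cmp A). 2:{ apply sext; intro x; tauto. }
  lia.
Qed.

Lemma disj_f {X : Type} (f : (X -> Prop) -> Z) (Hm : Mod f) A B :
  (forall x, A x -> B x -> False) -> f (union A B) = f A + f B - f emp.
Proof.
  intros Hd. pose proof (Hm A B) as h.
  replace (inter A B) with (fun _ : X => False) in h.
  2:{ apply sext; intro x; unfold inter; firstorder. }
  lia.
Qed.

Lemma UF {X : Type} (f : (X -> Prop) -> Z) (Hm : Mod f) (Y : X -> Prop) :
  (forall B, subset B Y -> f B - f emp = 0 \/ f B - f emp = 1) ->
  f Y - f emp = 1 ->
  ultrafilter_on Y (fun B => subset B Y /\ f B - f emp = 1).
Proof.
  intros Hr HY. split.
  - split. { intros U [HU _]; exact HU. }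
    split. { split; [intros x h; exact h | exact HY]. }
    split. { intros [_ H]; lia. }
    split.
    { intros U V [HU H1] HUV HVY. split; auto.
      pose proof (sub_split f Hm U V HUV).
      assert (subset (dif V U) Y) by (intros x [h _]; auto).
      pose proof (Hr _ H0). pose proof (Hr V HVY). lia. }
    { intros U V [HU H1] [HV H2].
      assert (subset (inter U V) Y) by (intros x [h _]; auto).
      assert (subset (union U V) Y) by (intros x [h|h]; auto).
      split; auto. pose proof (Hm U V). pose proof (Hr _ H). pose proof (Hr _ H0). lia. }
  - intros G [G1 [G2 [G3 [G4 G5]]]] HFG U HGU.
    pose proof (G1 U HGU) as HU. split; auto.
    destruct (Hr U HU) as [h|h]; [|exact h]. exfalso.
    pose proof (sub_split f Hm U Y HU).
    assert (HD : subset (dif Y U) Y) by (intros x [h' _]; auto).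
    assert (G (dif Y U)). { apply HFG. split; auto. lia. }
    pose proof (G5 _ _ HGU H0).
    replace (inter U (dif Y U)) with (fun _ : X => False) in H1.
    2:{ apply sext; intro x; unfold inter; tauto. }
    auto.
Qed.

Lemma free_of {X : Type} (f : (X -> Prop) -> Z) (Hm : Mod f) (Y : X -> Prop) :
  (forall x, f (sg x) = f emp) -> f Y - f emp = 1 ->
  free_family (fun B => subset B Y /\ f B - f emp = 1).
Proof.
  intros Hs HY x. destruct (classic (Y x)).
  - exists (dif Y (sg x)). split; [split|].
    + intros y [h _]; auto.
    + assert (subset (sg x) Y) by (intros y e; subst; auto).
      pose proof (sub_split f Hm _ _ H0). rewrite Hs in H1. lia.
    + tauto.
  - exists Y. split; [split; [intros y h; auto| auto] | auto].
Qed.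

Lemma union_T {X : Type} (T : (X -> Prop) -> Prop) (HT : is_topology T) (A : X -> Prop) :
  (forall x, A x -> T (sg x)) -> T A.
Proof.
  intros H. destruct HT as [_ [_ [HU _]]].
  pose proof (HU (fun U => exists x, A x /\ U = sg x)) as h. cbv beta in h.
  replace (fun x => exists U, (exists x0, A x0 /\ U = sg x0) /\ U x) with A in h.
  - apply h. intros U [x [Ax e]]; subst; auto.
  - apply sext; intro x; split.
    + intro Ax. exists (sg x). split; eauto.
    + intros [U [[y [Ay e]] Ux]]. subst. subst. auto.
Qed.

Lemma uf_prime {X : Type} (Y : X -> Prop) F : ultrafilter_on Y F ->
  forall U, subset U Y -> F U \/ F (dif Y U).
Proof.
  intros [[F1 [F2 [F3 [F4 F5]]]] Hmax] U HU.
  destruct (classic (F (dif Y U))) as [h|h]; [right; exact h| left].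
  apply (Hmax (fun V => subset V Y /\ exists W, F W /\ subset (inter W U) V)).
  - split. { intros V [h1 _]; auto. }
    split. { split. intros x hx; auto. exists Y; split; auto. intros x [a b]; auto. }
    split. { intros [_ [W [HW HWU]]]. apply h. apply (F4 W); auto.
             - intros x Wx. split. apply (F1 W HW x Wx). intro Ux. apply (HWU x). split; auto.
             - intros x [a b]; auto. }
    split. { intros V V' [h1 [W [HW HWU]]] HVV' HV'. split; auto. exists W; split; auto.
             intros x hx; auto. }
    { intros V V' [h1 [W [HW HWU]]] [h2 [W' [HW' HWU']]]. split.
      intros x [a b]; auto. exists (inter W W'). split; auto.
      intros x [[a b] c]. split. apply HWU; split; auto. apply HWU'; split; auto. }
  - intros V HV. split. apply (F1 V HV). exists V. split; auto. intros x [a b]; auto.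
  - split; auto. exists Y. split; auto. intros x [a b]; auto.
Qed.

Lemma uf_union {X : Type} (Y : X -> Prop) F : ultrafilter_on Y F ->
  forall U V, subset U Y -> subset V Y -> (F (union U V) <-> F U \/ F V).
Proof.
  intros HF U V HU HV. pose proof HF as [[F1 [F2 [F3 [F4 F5]]]] _]. split.
  - intros h. destruct (classic (F U)) as [a|a]; auto. destruct (classic (F V)) as [b|b]; auto.
    exfalso. destruct (uf_prime Y F HF U HU) as [c|c]; [tauto|].
    destruct (uf_prime Y F HF V HV) as [d|d]; [tauto|].
    pose proof (F5 _ _ h (F5 _ _ c d)) as e.
    replace (inter (union U V) (inter (dif Y U) (dif Y V))) with (fun _ : X => False) in e; auto.
    apply sext; intro x; unfold inter, union; tauto.
  - assert (subset (union U V) Y) by (intros x [a|a]; auto).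
    intros [a|a]; [apply (F4 U) | apply (F4 V)]; auto; intros x h; unfold union; auto.
Qed.

Definition ind (P : Prop) : Z := if excluded_middle_informative P then 1 else 0.
Lemma ind_cases P : (P /\ ind P = 1) \/ (~ P /\ ind P = 0).
Proof. unfold ind; destruct (excluded_middle_informative P); auto. Qed.
Lemma ind1 (P : Prop) : P -> ind P = 1.
Proof. unfold ind; destruct (excluded_middle_informative P); tauto. Qed.
Lemma ind0 (P : Prop) : ~ P -> ind P = 0.
Proof. unfold ind; destruct (excluded_middle_informative P); tauto. Qed.
Lemma ind_mod (P Q R S : Prop) : (P \/ Q <-> R) -> (P /\ Q <-> S) -> ind P + ind Q = ind R + ind S.
Proof.
  intros h1 h2. destruct (ind_cases P) as [[a b]|[a b]]; destruct (ind_cases Q) as [[c d]|[c d]];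
  destruct (ind_cases R) as [[e g]|[e g]]; destruct (ind_cases S) as [[i j]|[i j]]; tauto || lia.
Qed.

Lemma chi_mod {X : Type} (Y : X -> Prop) F : ultrafilter_on Y F -> forall A B,
  ind (F (inter A Y)) + ind (F (inter B Y)) = ind (F (inter (union A B) Y)) + ind (F (inter (inter A B) Y)).
Proof.
  intros HF A B. pose proof HF as [[F1 [F2 [F3 [F4 F5]]]] _]. apply ind_mod.
  - replace (inter (union A B) Y) with (union (inter A Y) (inter B Y)).
    2:{ apply sext; intro x; unfold inter, union; tauto. }
    rewrite uf_union; [tauto| exact HF | |]; intros x [a b]; auto.
  - replace (inter (inter A B) Y) with (inter (inter A Y) (inter B Y)).
    2:{ apply sext; intro x; unfold inter; tauto. }
    split. intros [a b]; auto.
    intros h; split; (eapply F4; [exact h| |]); intros x; unfold inter; tauto.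
Qed.

Lemma case1 {X : Type} (T : (X->Prop)->Prop) (HT : is_topology T) (f : (X->Prop)->Z)
  (Hr : R3 f) (Hm : Mod f) (Hn : exists A, f A = -1) (Hz : exists A, f A = 0)
  (HTf : forall U, T U <-> set_empty U \/ set_full U \/ f U = 1) (Hc : f emp = 1) :
  exists a b : X, a <> b /\ (forall U, T U <-> set_empty U \/ set_full U \/ subset U (fun x => x <> a /\ x <> b)).
Proof.
  assert (mono : forall B C, subset B C -> f C <= f B).
  { intros B C HBC. pose proof (sub_split f Hm B C HBC). pose proof (Hr (dif C B)). (cbv beta in *; lia). }
  assert (Hfull : f full = -1).
  { destruct Hn as [A HA]. pose proof (mono A full (fun _ _ => I)). pose proof (Hr full). (cbv beta in *; lia). }
  assert (Tsing : forall A, (forall x, A x -> f (sg x) = 1) -> T A).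
  { intros A HA. apply union_T with (1:=HT). intros x Ax. apply HTf. right; right; auto. }
  assert (HZ0 : f (fun x => f (sg x) <> 1) = -1).
  { assert (h : T (fun x => f (sg x) = 1)) by (apply Tsing; auto).
    apply HTf in h. destruct h as [h|[h|h]].
    - replace (fun x => f (sg x) <> 1) with (fun _ : X => True); auto.
      apply sext; intro x; specialize (h x); tauto.
    - exfalso. destruct Hz as [A HA]. assert (h2 : T A) by (apply Tsing; intros x _; apply h).
      apply HTf in h2. destruct h2 as [E|[E|E]].
      + replace A with (fun _ : X => False) in HA; [(cbv beta in *; lia)|]. apply sext; intro x; specialize (E x); tauto.
      + replace A with (fun _ : X => True) in HA; [(cbv beta in *; lia)|]. apply sext; intro x; specialize (E x); tauto.
      + (cbv beta in *; lia).
    - pose proof (comp_f f Hm (fun x => f (sg x) = 1)). (cbv beta in *; lia). }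
  assert (Hout : forall x, f (sg x) <> 1 -> f (sg x) = 0).
  { intros x hx. destruct (Hr (sg x)) as [h|[h|h]]; [|auto|tauto]. exfalso.
    destruct Hz as [A HA]. destruct (classic (A x)).
    - assert (subset (sg x) A) by (intros y e; subst; auto). pose proof (mono _ _ H0). (cbv beta in *; lia).
    - pose proof (comp_f f Hm A).
      assert (subset (sg x) (cmp A)) by (intros y e; subst; auto). pose proof (mono _ _ H1). (cbv beta in *; lia). }
  destruct (classic (exists a, f (sg a) <> 1)) as [[a Ha]|Hna].
  2:{ exfalso. replace (fun x => f (sg x) <> 1) with (fun _ : X => False) in HZ0; [(cbv beta in *; lia)|].
      apply sext; intro x. split; [tauto|]. intro h; apply Hna; eauto. }
  pose proof (Hout a Ha) as Ha0.
  assert (subset (sg a) (cmp (fun x => f (sg x) = 1))) by (intros y e; subst; auto).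
  pose proof (sub_split f Hm _ _ H) as HD. cbv beta in HD.
  destruct (classic (exists b, (f (sg b) <> 1 /\ b <> a))) as [[b [Hb1 Hb2]]|Hnb].
  2:{ exfalso. replace (fun x => (~ f (sg x) = 1) /\ ~ x = a) with (fun _ : X => False) in HD; [(cbv beta in *; lia)|].
      apply sext; intro x. split; [tauto|]. intro h; apply Hnb; eauto. }
  pose proof (Hout b Hb1) as Hb0.
  assert (subset (sg b) (fun x => (~ f (sg x) = 1) /\ ~ x = a)) by (intros y e; subst; auto).
  pose proof (sub_split f Hm _ _ H0) as HD'. cbv beta in HD'.
  assert (Hcl : forall x, f (sg x) <> 1 -> x = a \/ x = b).
  { intros x hx. destruct (classic (x = a \/ x = b)); auto. exfalso.
    assert (subset (sg x) (fun y => ((~ f (sg y) = 1) /\ ~ y = a) /\ ~ y = b)).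
    { intros y e; subst. tauto. }
    pose proof (mono _ _ H2). pose proof (Hout x hx). (cbv beta in *; lia). }
  exists a, b. split; [auto|]. intros U. split.
  - intros h; apply HTf in h. destruct h as [h|[h|h]]; auto. right; right.
    intros x Ux. split; intro e; subst.
    + assert (subset (sg a) U) by (intros y e; subst; auto). pose proof (mono _ _ H1). (cbv beta in *; lia).
    + assert (subset (sg b) U) by (intros y e; subst; auto). pose proof (mono _ _ H1). (cbv beta in *; lia).
  - intros h. apply HTf. destruct h as [h|[h|h]]; auto. apply HTf. apply Tsing. intros x Ux.
    destruct (classic (f (sg x) = 1)) as [e|e]; auto.
    destruct (Hcl x e) as [e'|e']; subst; destruct (h _ Ux); congruence.
Qed.

Lemma case2 {X : Type} (T : (X->Prop)->Prop) (f : (X->Prop)->Z)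
  (Hr : R3 f) (Hm : Mod f) (Hz : exists A, f A = 0) (Hp : exists A, f A = 1)
  (HTf : forall U, T U <-> set_empty U \/ set_full U \/ f U = 1) (Hc : f emp = -1) :
  (exists (a : X) (F' : (X -> Prop) -> Prop),
      ultrafilter_on (fun x => x <> a) F' /\
      ((forall U, T U <-> set_empty U \/ set_full U \/ F' U) \/
       (forall U, T U <-> set_empty U \/ set_full U \/
          exists F, F' F /\ set_eq U (union (fun x => x = a) F))))
   \/
   (exists (A : X -> Prop) (F' F'' : (X -> Prop) -> Prop),
      ultrafilter_on A F' /\ free_family F' /\
      ultrafilter_on (fun x => ~ A x) F'' /\ free_family F'' /\
      (forall U, T U <-> set_empty U \/ set_full U \/
         exists G H, F' G /\ F'' H /\ set_eq U (union G H))).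
Proof.
  assert (mono : forall B C, subset B C -> f B <= f C).
  { intros B C HBC. pose proof (sub_split f Hm B C HBC). pose proof (Hr (dif C B)). blia. }
  assert (Hfull : f full = 1).
  { destruct Hp as [A HA]. pose proof (mono A full (fun _ _ => I)). pose proof (Hr full). blia. }
  destruct Hz as [A0 HA0].
  assert (HcA0 : f (fun x => ~ A0 x) = 0) by (pose proof (comp_f f Hm A0); blia).
  destruct (classic (exists x, f (sg x) = 0)) as [[a Ha]|Hno].
  - left. exists a, (fun B => subset B (fun x => x <> a) /\ f B - f emp = 1).
    assert (Hle : forall B, subset B (fun x => x <> a) -> f B <= 0).
    { intros B HB. assert (forall x, B x -> sg a x -> False) by (intros x Bx e; apply (HB x Bx); auto).
      pose proof (disj_f f Hm B (sg a) H). pose proof (Hr (union B (sg a))). blia. }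
    assert (HY : f (fun x => x <> a) = 0) by (pose proof (comp_f f Hm (sg a)); blia).
    split.
    { apply UF; auto. intros B HB. pose proof (Hle B HB). pose proof (Hr B). blia. blia. }
    right. intros U. rewrite HTf. split; intros [h|[h|h]]; auto; right; right.
    + assert (Ua : U a).
      { destruct (classic (U a)); auto. exfalso.
        assert (subset U (fun x => x <> a)) by (intros x Ux e; subst; auto).
        pose proof (Hle U H0). blia. }
      exists (dif U (sg a)). split; [split|].
      * intros x [_ h']; auto.
      * assert (subset (sg a) U) by (intros x e; subst; auto).
        pose proof (sub_split f Hm _ _ H). blia.
      * intros x. unfold union. destruct (classic (x = a)); subst; tauto.
    + destruct h as [F [[HFs HFv] Heq]]. rewrite (sext U _ Heq).
      assert (forall x, sg a x -> F x -> False) by (intros x e Fx; apply (HFs x Fx); auto).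
      pose proof (disj_f f Hm _ _ H). blia.
  - right.
    assert (Hs : forall x, f (sg x) = -1).
    { intros x. destruct (Hr (sg x)) as [h|[h|h]]; auto; exfalso. apply Hno; eauto.
      destruct (classic (A0 x)).
      - assert (subset (sg x) A0) by (intros y e; subst; auto). pose proof (mono _ _ H0). blia.
      - pose proof (comp_f f Hm (sg x)).
        assert (subset A0 (fun y => ~ y = x)) by (intros y Ay e; subst; auto).
        pose proof (mono _ _ H1). blia. }
    exists A0, (fun B => subset B A0 /\ f B - f emp = 1),
      (fun B => subset B (fun x => ~ A0 x) /\ f B - f emp = 1).
    split. { apply UF; auto. intros B HB. pose proof (mono _ _ HB). pose proof (Hr B). blia. blia. }
    split. { apply free_of; auto. intros; rewrite Hs; auto. blia. }
    split. { apply UF; auto. intros B HB. pose proof (mono _ _ HB). pose proof (Hr B). blia. blia. }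
    split. { apply free_of; auto. intros; rewrite Hs; auto. blia. }
    intros U. rewrite HTf. split; intros [h|[h|h]]; auto; right; right.
    + exists (inter U A0), (fun x => U x /\ ~ A0 x).
      assert (s1 : subset (inter U A0) A0) by (intros x [_ b]; auto).
      assert (s2 : subset (fun x => U x /\ ~ A0 x) (fun x => ~ A0 x)) by (intros x [_ b]; auto).
      pose proof (split_f f Hm U A0). pose proof (mono _ _ s1). pose proof (mono _ _ s2).
      split; [split; [auto|blia]|]. split; [split; [auto|blia]|].
      intros x. unfold union, inter. destruct (classic (A0 x)); tauto.
    + destruct h as [G [H [[HG1 HG2] [[HH1 HH2] Heq]]]]. rewrite (sext U _ Heq).
      assert (forall x, G x -> H x -> False) by (intros x a b; apply (HH1 x b); auto).
      pose proof (disj_f f Hm _ _ H0). blia.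
Qed.

Lemma case3 {X : Type} (T : (X->Prop)->Prop) (HT : is_topology T) (f : (X->Prop)->Z)
  (Hr : R3 f) (Hm : Mod f) (Hn : exists A, f A = -1) (Hp : exists A, f A = 1)
  (HTf : forall U, T U <-> set_empty U \/ set_full U \/ f U = 1) (Hc : f emp = 0) :
  exists (a : X) (F' : (X -> Prop) -> Prop),
      ultrafilter_on (fun x => x <> a) F' /\
      (forall U, T U <-> set_empty U \/ set_full U \/ F' U).
Proof.
  assert (Hfull : f full = 0).
  { destruct Hn as [A HA]. destruct Hp as [B HB].
    pose proof (comp_f f Hm A). pose proof (comp_f f Hm B).
    pose proof (Hr (fun x => ~ A x)). pose proof (Hr (fun x => ~ B x)). blia. }
  destruct (classic (exists a, f (sg a) = -1)) as [[a Ha]|Hno].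
  2:{ exfalso. destruct Hp as [A HA].
      assert (Hx : forall x, ~ A x -> f (sg x) = 0 /\ f (union A (sg x)) = 1).
      { intros x nx. assert (forall y, A y -> sg x y -> False) by (intros y Ay e; subst; auto).
        pose proof (disj_f f Hm _ _ H). pose proof (Hr (union A (sg x))). pose proof (Hr (sg x)).
        assert (f (sg x) <> -1) by (intro e; apply Hno; eauto). blia. }
      destruct (classic (exists x0, ~ A x0)) as [[x0 Hx0]|Hall].
      2:{ pose proof (comp_f f Hm A). replace (fun x => ~ A x) with (fun _ : X => False) in H; [blia|].
          apply sext; intro x; split; [tauto|]. intro h; apply Hall; eauto. }
      destruct (classic (exists y, A y)) as [[y0 Hy0]|Hne].
      2:{ replace A with (fun _ : X => False) in HA; [blia|].
          apply sext; intro x; split; [tauto|]. intro h; apply Hne; eauto. }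
      assert (HTY : T (fun y => y <> x0)).
      { destruct HT as [_ [_ [HU _]]].
        pose proof (HU (fun U => U = A \/ exists x, ~ A x /\ x <> x0 /\ U = union A (sg x))) as h.
        cbv beta in h.
        replace (fun x => exists U, (U = A \/ exists x1, ~ A x1 /\ x1 <> x0 /\ U = union A (sg x1)) /\ U x)
          with (fun y => y <> x0) in h.
        - apply h. intros U [e|[x [nx [ne e]]]]; subst; apply HTf; right; right; auto.
          apply (Hx x nx).
        - apply sext; intro y; split.
          + intro ny. destruct (classic (A y)).
            * exists A; auto.
            * exists (union A (sg y)). split; [right; exists y; auto| right; reflexivity].
          + intros [U [[e|[x [nx [ne e]]]] Uy]]; subst.
            * intro e; subst; auto.
            * destruct Uy as [Ay|e]; [intro e; subst; auto| subst; auto]. }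
      apply HTf in HTY. pose proof (comp_f f Hm (sg x0)). pose proof (Hx x0 Hx0).
      destruct HTY as [e|[e|e]].
      - apply (e y0). intro e'; subst; auto.
      - apply (e x0); auto.
      - blia. }
  exists a, (fun B => subset B (fun x => x <> a) /\ f B - f emp = 1).
  assert (HY : f (fun x => x <> a) = 1) by (pose proof (comp_f f Hm (sg a)); blia).
  split.
  { apply UF; auto. intros B HB.
    assert (forall x, B x -> sg a x -> False) by (intros x Bx e; apply (HB x Bx); auto).
    pose proof (disj_f f Hm B (sg a) H). pose proof (Hr (union B (sg a))). pose proof (Hr B). blia. blia. }
  intros U. rewrite HTf. split; intros [h|[h|h]]; auto; right; right.
  - split; [|blia]. intros x Ux e; subst.
    assert (subset (sg a) U) by (intros y e; subst; auto).
    pose proof (sub_split f Hm _ _ H). pose proof (Hr (dif U (sg a))). blia.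
  - destruct h; blia.
Qed.
Ltac icase P := destruct (ind_cases P) as [[? ?]|[? ?]].

Lemma uf_not_emp {X : Type} (Y : X -> Prop) F : ultrafilter_on Y F -> ~ F emp.
Proof. intros [[_ [_ [h _]]] _]; exact h. Qed.
Lemma uf_sub {X : Type} (Y : X -> Prop) F : ultrafilter_on Y F -> forall U, F U -> subset U Y.
Proof. intros [[h _] _]; exact h. Qed.
Lemma uf_Y {X : Type} (Y : X -> Prop) F : ultrafilter_on Y F -> F Y.
Proof. intros [[_ [h _]] _]; exact h. Qed.

Theorem theorem3 (X : Type) (T : (X -> Prop) -> Prop) (HT : is_topology T) :
  (exists f : (X -> Prop) -> Z,
      (forall A, f A = -1 \/ f A = 0 \/ f A = 1) /\
      (exists A, f A = -1) /\ (exists A, f A = 0) /\ (exists A, f A = 1) /\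
      (forall A B, f A + f B = f (union A B) + f (inter A B)) /\
      ((forall U, T U <-> set_empty U \/ set_full U \/ f U = 1) \/
       (forall U, T U <-> set_empty U \/ set_full U \/ f U = -1)))
  <->
  ((* Form 1 *)
   (exists (a : X) (F' : (X -> Prop) -> Prop),
      ultrafilter_on (fun x => x <> a) F' /\
      ((forall U, T U <-> set_empty U \/ set_full U \/ F' U) \/
       (forall U, T U <-> set_empty U \/ set_full U \/
          exists F, F' F /\ set_eq U (union (fun x => x = a) F))))
   \/
   (* Form 2 *)
   (exists (A : X -> Prop) (F' F'' : (X -> Prop) -> Prop),
      ultrafilter_on A F' /\ free_family F' /\
      ultrafilter_on (fun x => ~ A x) F'' /\ free_family F'' /\
      (forall U, T U <-> set_empty U \/ set_full U \/
         exists G H, F' G /\ F'' H /\ set_eq U (union G H)))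
   \/
   (* Form 3 *)
   (exists a b : X, a <> b /\
      (forall U, T U <-> set_empty U \/ set_full U \/
         subset U (fun x => x <> a /\ x <> b)))).
Proof.
  split.
  -
    assert (L : forall f : (X -> Prop) -> Z, R3 f -> Mod f -> (exists A, f A = -1) ->
      (exists A, f A = 0) -> (exists A, f A = 1) ->
      (forall U, T U <-> set_empty U \/ set_full U \/ f U = 1) ->
  ((exists (a : X) (F' : (X -> Prop) -> Prop),
      ultrafilter_on (fun x => x <> a) F' /\
      ((forall U, T U <-> set_empty U \/ set_full U \/ F' U) \/
       (forall U, T U <-> set_empty U \/ set_full U \/
          exists F, F' F /\ set_eq U (union (fun x => x = a) F))))
   \/
   (exists (A : X -> Prop) (F' F'' : (X -> Prop) -> Prop),
      ultrafilter_on A F' /\ free_family F' /\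
      ultrafilter_on (fun x => ~ A x) F'' /\ free_family F'' /\
      (forall U, T U <-> set_empty U \/ set_full U \/
         exists G H, F' G /\ F'' H /\ set_eq U (union G H)))
   \/
   (exists a b : X, a <> b /\
      (forall U, T U <-> set_empty U \/ set_full U \/
         subset U (fun x => x <> a /\ x <> b))))).
    { intros f Hr Hm Hn Hz Hp HTf. destruct (Hr (fun _ => False)) as [c|[c|c]].
      - destruct (case2 T f Hr Hm Hz Hp HTf c) as [h|h]; [left|right; left]; exact h.
      - left. destruct (case3 T HT f Hr Hm Hn Hp HTf c) as [a [F' [h1 h2]]].
        exists a, F'. split; auto.
      - right; right. exact (case1 T HT f Hr Hm Hn Hz HTf c). }
    intros [f [Hr [Hn [Hz [Hp [Hm [HT1|HT1]]]]]]].
    + apply (L f); auto.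
    + apply (L (fun A => - f A)).
      * intros A; pose proof (Hr A); lia.
      * intros A B; pose proof (Hm A B); lia.
      * destruct Hp as [A h]; exists A; lia.
      * destruct Hz as [A h]; exists A; lia.
      * destruct Hn as [A h]; exists A; lia.
      * intros U; rewrite HT1; split; intros [h|[h|h]]; auto; right; right; lia.
  -
    intros [[a [F' [HU [HT1|HT1]]]] | [[A0 [F' [F'' [HU1 [_ [HU2 [_ HT2]]]]]]] | [a [b [hab HT3]]]]].
    + exists (fun A => ind (F' (inter A (fun x => x <> a))) - ind (A a)).
      cbv beta. split; [|split; [|split; [|split; [|split]]]].
      * intros A. icase (F' (inter A (fun x => x <> a))); icase (A a); lia.
      * exists (sg a). rewrite (ind1 (a = a)) by reflexivity.
        replace (inter (sg a) (fun x => x <> a)) with (fun _ : X => False).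
        2:{ apply sext; intro x; unfold inter; tauto. }
        rewrite ind0 by (apply (uf_not_emp _ _ HU)). lia.
      * exists (fun _ => False).
        replace (inter (fun _ : X => False) (fun x => x <> a)) with (fun _ : X => False).
        2:{ apply sext; intro x; unfold inter; tauto. }
        rewrite ind0 by (apply (uf_not_emp _ _ HU)). rewrite ind0 by tauto. lia.
      * exists (fun x => x <> a).
        replace (inter (fun x => x <> a) (fun x => x <> a)) with (fun x => x <> a).
        2:{ apply sext; intro x; unfold inter; tauto. }
        rewrite ind1 by (apply (uf_Y _ _ HU)). rewrite ind0 by tauto. lia.
      * intros A B. pose proof (chi_mod _ _ HU A B).
        pose proof (ind_mod (A a) (B a) (union A B a) (inter A B a)
          ltac:(unfold union; tauto) ltac:(unfold inter; tauto)). lia.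
      * left. intros U. rewrite HT1. split; intros [h|[h|h]]; auto; right; right.
        -- pose proof (uf_sub _ _ HU U h) as hs.
           replace (inter U (fun x => x <> a)) with U.
           2:{ apply sext; intro x; unfold inter; split; [intro; split; auto| tauto]. }
           rewrite ind1 by auto. rewrite ind0 by (intro Ua; apply (hs a Ua); auto). lia.
        -- icase (F' (inter U (fun x => x <> a))); icase (U a); try lia.
           replace U with (inter U (fun x => x <> a)); auto.
           apply sext; intro x; unfold inter; split; [tauto|]. intro; split; auto. intro e; subst; auto.
    + exists (fun A => ind (F' (inter A (fun x => x <> a))) + ind (A a) - 1).
      cbv beta. split; [|split; [|split; [|split; [|split]]]].
      * intros A. icase (F' (inter A (fun x => x <> a))); icase (A a); lia.
      * exists (fun _ => False).
        replace (inter (fun _ : X => False) (fun x => x <> a)) with (fun _ : X => False).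
        2:{ apply sext; intro x; unfold inter; tauto. }
        rewrite ind0 by (apply (uf_not_emp _ _ HU)). rewrite ind0 by tauto. lia.
      * exists (sg a). rewrite (ind1 (a = a)) by reflexivity.
        replace (inter (sg a) (fun x => x <> a)) with (fun _ : X => False).
        2:{ apply sext; intro x; unfold inter; tauto. }
        rewrite ind0 by (apply (uf_not_emp _ _ HU)). lia.
      * exists (fun _ => True).
        replace (inter (fun _ : X => True) (fun x => x <> a)) with (fun x => x <> a).
        2:{ apply sext; intro x; unfold inter; tauto. }
        rewrite ind1 by (apply (uf_Y _ _ HU)). rewrite ind1 by tauto. lia.
      * intros A B. pose proof (chi_mod _ _ HU A B).
        pose proof (ind_mod (A a) (B a) (union A B a) (inter A B a)
          ltac:(unfold union; tauto) ltac:(unfold inter; tauto)). lia.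
      * left. intros U. rewrite HT1. split; intros [h|[h|h]]; auto; right; right.
        -- destruct h as [F [HF Heq]]. rewrite (sext U _ Heq).
           pose proof (uf_sub _ _ HU F HF) as hs.
           replace (inter (union (sg a) F) (fun x => x <> a)) with F.
           2:{ apply sext; intro x; unfold inter, union; split.
               - intro Fx; split; auto.
               - intros [[e|Fx] ne]; [contradiction|auto]. }
           rewrite ind1 by auto. rewrite ind1 by (left; reflexivity). lia.
        -- icase (F' (inter U (fun x => x <> a))); icase (U a); try lia.
           exists (inter U (fun x => x <> a)). split; auto.
           intro x; unfold inter, union. split.
           ++ intro Ux. destruct (classic (x = a)); [left|right]; auto.
           ++ intros [e|[Ux _]]; [subst|]; auto.
    + exists (fun A => ind (F' (inter A A0)) + ind (F'' (inter A (fun x => ~ A0 x))) - 1).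
      cbv beta. split; [|split; [|split; [|split; [|split]]]].
      * intros A. icase (F' (inter A A0)); icase (F'' (inter A (fun x => ~ A0 x))); lia.
      * exists (fun _ => False).
        replace (inter (fun _ : X => False) A0) with (fun _ : X => False).
        2:{ apply sext; intro x; unfold inter; tauto. }
        replace (inter (fun _ : X => False) (fun x => ~ A0 x)) with (fun _ : X => False).
        2:{ apply sext; intro x; unfold inter; tauto. }
        rewrite ind0 by (apply (uf_not_emp _ _ HU1)). rewrite ind0 by (apply (uf_not_emp _ _ HU2)). lia.
      * exists A0.
        replace (inter A0 A0) with A0.
        2:{ apply sext; intro x; unfold inter; tauto. }
        replace (inter A0 (fun x => ~ A0 x)) with (fun _ : X => False).
        2:{ apply sext; intro x; unfold inter; tauto. }
        rewrite ind1 by (apply (uf_Y _ _ HU1)). rewrite ind0 by (apply (uf_not_emp _ _ HU2)). lia.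
      * exists (fun _ => True).
        replace (inter (fun _ : X => True) A0) with A0.
        2:{ apply sext; intro x; unfold inter; tauto. }
        replace (inter (fun _ : X => True) (fun x => ~ A0 x)) with (fun x => ~ A0 x).
        2:{ apply sext; intro x; unfold inter; tauto. }
        rewrite ind1 by (apply (uf_Y _ _ HU1)). rewrite ind1 by (apply (uf_Y _ _ HU2)). lia.
      * intros A B. pose proof (chi_mod _ _ HU1 A B). pose proof (chi_mod _ _ HU2 A B). lia.
      * left. intros U. rewrite HT2. split; intros [h|[h|h]]; auto; right; right.
        -- destruct h as [G [H [HG [HH Heq]]]]. rewrite (sext U _ Heq).
           pose proof (uf_sub _ _ HU1 G HG) as hG. pose proof (uf_sub _ _ HU2 H HH) as hH.
           replace (inter (union G H) A0) with G.
           2:{ apply sext; intro x; unfold inter, union; split.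
               - intro Gx; split; auto.
               - intros [[Gx|Hx] Ax]; auto. exfalso; apply (hH x Hx Ax). }
           replace (inter (union G H) (fun x => ~ A0 x)) with H.
           2:{ apply sext; intro x; unfold inter, union; split.
               - intro Hx; split; auto.
               - intros [[Gx|Hx] Ax]; auto. exfalso; apply Ax; apply (hG x Gx). }
           rewrite ind1 by auto. rewrite ind1 by auto. lia.
        -- icase (F' (inter U A0)); icase (F'' (inter U (fun x => ~ A0 x))); try lia.
           exists (inter U A0), (inter U (fun x => ~ A0 x)). split; [auto|split; [auto|]].
           intro x; unfold inter, union. destruct (classic (A0 x)); tauto.
    + exists (fun A => 1 - ind (A a) - ind (A b)).
      cbv beta. split; [|split; [|split; [|split; [|split]]]].
      * intros A. icase (A a); icase (A b); lia.
      * exists (fun x => x = a \/ x = b). rewrite ind1 by (left; reflexivity).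
        rewrite ind1 by (right; reflexivity). lia.
      * exists (sg a). cbv beta. rewrite (ind1 (a = a)) by reflexivity.
        rewrite (ind0 (b = a)) by (intro e; apply hab; auto). lia.
      * exists (fun _ => False). cbv beta. rewrite (ind0 False) by tauto. lia.
      * intros A B.
        pose proof (ind_mod (A a) (B a) (union A B a) (inter A B a)
          ltac:(unfold union; tauto) ltac:(unfold inter; tauto)).
        pose proof (ind_mod (A b) (B b) (union A B b) (inter A B b)
          ltac:(unfold union; tauto) ltac:(unfold inter; tauto)). lia.
      * left. intros U. rewrite HT3. split; intros [h|[h|h]]; auto; right; right.
        -- rewrite (ind0 (U a)) by (intro Ua; destruct (h a Ua) as [h1 h2]; apply h1; reflexivity).
           rewrite (ind0 (U b)) by (intro Ub; destruct (h b Ub) as [h1 h2]; apply h2; reflexivity). lia.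
        -- icase (U a); icase (U b); try lia.
           intros x Ux; split; intro e; subst; auto.
Qed.
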